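(* There exist a financial system $S$ with payment priorities and a bank $v$ such that: $S$ has exactly one solution $r$; and for some system $S'$ obtained from $S$ by changing the priorities of (some of) the contracts whose debtor is $v$ (everything else unchanged), $S'$ has exactly one solution $r'$ and $r'_v>r_v$.
   Context: A financial system with payment priorities consists of: a finite set $V$ of banks; external assets $e_v\ge 0$ for each $v\in V$; a number $P\ge 1$ of priority levels; and a finite set of contracts, each of which is either a debt contract from a debtor $u$ to a creditor $v\neq u$ with weight $c>0$, or a credit default swap (CDS) from a debtor $u$ to a creditor $v\neq u$ in reference to a bank $w\notin\{u,v\}$ (the reference entity) with weight $c>0$. Every contract has a priority in $\{1,\dots,P\}$ (1 is the highest priority). It is assumed that every bank that is the reference entity of some CDS is the debtor of at least one debt contract of positive weight. Given a recovery rate vector $r\in[0,1]^V$: the liability of a contract $k$ is $l_k(r)=c$ if $k$ is a debt of weight $c$, and $l_k(r)=c\,(1-r_w)$ if $k$ is a CDS of weight $c$ in reference to $w$. For a bank $v$, $l_v(r)$ is the sum of the liabilities of the contracts with debtor $v$; $l_v^{(\rho)}(r)$ is the sum of the liabilities of contracts with debtor $v$ and priority $\rho$; and $l_v^{(\le\rho)}(r)=\sum_{i=1}^{\rho}l_v^{(i)}(r)$ (with $l_v^{(\le 0)}=0$). The payment on a contract $k$ with debtor $v$ and priority $\rho$ is $p_k(r)=l_k(r)\cdot\min\{1,\max\{0,(r_v l_v(r)-l_v^{(\le\rho-1)}(r))/l_v^{(\rho)}(r)\}\}$ (and $p_k(r)=0$ if $l_v^{(\rho)}(r)=0$). The assets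 of $v$ are $a_v(r)=e_v+\sum_k p_k(r)$, summing over contracts $k$ with creditor $v$. A vector $r\in[0,1]^V$ is a solution (clearing vector) if for every $v\in V$: $r_v=1$ when $a_v(r)\ge l_v(r)$, and $r_v=a_v(r)/l_v(r)$ when $a_v(r)<l_v(r)$. The payoff of $v$ is $q_v(r)=\max\{a_v(r)-l_v(r),0\}$. When $P=1$, payments reduce to $p_k(r)=r_v\,l_k(r)$ (principle of proportionality); this is called the base model. *)

(* Defs.v *)
From Stdlib Require Import Reals Lra List.
Import ListNotations.
Open Scope R_scope.

(* Banks are the natural numbers 0 .. nbanks-1. *)
Record contract := mkContract {
  debtor : nat;
  creditor : nat;
  weight : R;
  reference : option nat;  (* None = debt contract; Some w = CDS in reference to w *)
  prio : nat               (* priority, 1 = highest *)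
}.

Record fsystem := mkSystem {
  nbanks : nat;
  ext : nat -> R;           (* external assets *)
  nprio : nat;
  contracts : list contract
}.

Definition sumR (l : list R) : R := fold_right Rplus 0 l.

Definition wf_contract (S : fsystem) (k : contract) : Prop :=
  (debtor k < nbanks S)%nat /\ (creditor k < nbanks S)%nat /\
  debtor k <> creditor k /\ 0 < weight k /\
  (1 <= prio k <= nprio S)%nat /\
  match reference k with
  | None => True
  | Some w => (w < nbanks S)%nat /\ w <> debtor k /\ w <> creditor k /\
      exists k', In k' (contracts S) /\ debtor k' = w /\
                 reference k' = None /\ 0 < weight k'
  end.

Definition wf_system (S : fsystem) : Prop :=
  (1 <= nprio S)%nat /\
  (forall v, (v < nbanks S)%nat -> 0 <= ext S v) /\
  Forall (wf_contract S) (contracts S).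

Definition liab (r : nat -> R) (k : contract) : R :=
  match reference k with
  | None => weight k
  | Some w => weight k * (1 - r w)
  end.

Definition liab_bank (S : fsystem) (r : nat -> R) (v : nat) : R :=
  sumR (map (liab r) (filter (fun k => Nat.eqb (debtor k) v) (contracts S))).

Definition liab_prio (S : fsystem) (r : nat -> R) (v rho : nat) : R :=
  sumR (map (liab r)
    (filter (fun k => andb (Nat.eqb (debtor k) v) (Nat.eqb (prio k) rho)) (contracts S))).

(* l_v^{(<= rho)}(r) = sum_{i=1}^{rho} l_v^{(i)}(r); equals 0 for rho = 0 *)
Definition liab_le (S : fsystem) (r : nat -> R) (v rho : nat) : R :=
  sumR (map (fun i => liab_prio S r v (Datatypes.S i)) (seq 0 rho)).

Definition payment (S : fsystem) (r : nat -> R) (k : contract) : R :=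
  let v := debtor k in
  let rho := prio k in
  let lp := liab_prio S r v rho in
  if Req_EM_T lp 0 then 0
  else liab r k *
       Rmin 1 (Rmax 0 ((r v * liab_bank S r v - liab_le S r v (rho - 1)) / lp)).

Definition assets (S : fsystem) (r : nat -> R) (v : nat) : R :=
  ext S v + sumR (map (payment S r)
                   (filter (fun k => Nat.eqb (creditor k) v) (contracts S))).

(* r is a solution (clearing vector); only entries at banks matter *)
Definition is_solution (S : fsystem) (r : nat -> R) : Prop :=
  forall v, (v < nbanks S)%nat ->
    0 <= r v <= 1 /\
    (assets S r v >= liab_bank S r v -> r v = 1) /\
    (assets S r v < liab_bank S r v -> r v = assets S r v / liab_bank S r v).

(* r is the unique solution of S (uniqueness up to the values at the banks) *)
Definition unique_solution (S : fsystem) (r : nat -> R) : Prop :=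
  is_solution S r /\
  forall r', is_solution S r' -> forall u, (u < nbanks S)%nat -> r' u = r u.

Definition same_except_prio (v : nat) (k k' : contract) : Prop :=
  debtor k' = debtor k /\ creditor k' = creditor k /\ weight k' = weight k /\
  reference k' = reference k /\ (prio k' <> prio k -> debtor k = v).

Definition reprioritized (S S' : fsystem) (v : nat) : Prop :=
  nbanks S' = nbanks S /\ ext S' = ext S /\ nprio S' = nprio S /\
  Forall2 (same_except_prio v) (contracts S) (contracts S').

(* Main.v *)
Require Import Defs.
From Stdlib Require Import Reals List.
From Stdlib Require Import Lra Lia.
Import ListNotations.
Open Scope R_scope.
Open Scope R_scope.
Definition e (v:nat) : R := match v with O => 1 | _ => 0 end.
Definition S1 := mkSystem 3 e 2
  [mkContract 0 1 1 None 2; mkContract 0 2 1 None 1; mkContract 1 0 1 None 1; mkContract 1 2 1 None 1].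
Definition S2 := mkSystem 3 e 2
  [mkContract 0 1 1 None 1; mkContract 0 2 1 None 2; mkContract 1 0 1 None 1; mkContract 1 2 1 None 1].
Ltac crunch := unfold assets, payment, liab_prio, liab_bank, liab_le, liab; cbn -[Rmin Rmax];
  repeat (destruct Req_dec_T; [lra|]); rewrite ?Rplus_0_r, ?Rminus_0_r, ?Rmult_1_l, ?Rdiv_1_r;
  replace (1+1) with 2 by ring;
  unfold Rmin, Rmax; repeat (destruct Rle_dec); lra.
Lemma a10 r : 0 <= r 1%nat <= 1 -> assets S1 r 0 = 1 + r 1%nat.
Proof. intros. crunch. Qed.
Lemma a11 r : 0 <= r 0%nat <= 1 -> assets S1 r 1 = Rmax 0 (2 * r 0%nat - 1).
Proof. intros. unfold assets, payment, liab_prio, liab_bank, liab_le, liab; cbn -[Rmin Rmax];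
  repeat (destruct Req_dec_T; [lra|]); rewrite ?Rplus_0_r, ?Rminus_0_r, ?Rmult_1_l, ?Rdiv_1_r.
  unfold Rmin, Rmax; repeat (destruct Rle_dec); lra. Qed.
Lemma a12 r : 0 <= assets S1 r 2.
Proof. crunch. Qed.
Lemma a20 r : 0 <= r 1%nat <= 1 -> assets S2 r 0 = 1 + r 1%nat.
Proof. intros. crunch. Qed.
Lemma a21 r : 0 <= r 0%nat <= 1 -> assets S2 r 1 = Rmin 1 (2 * r 0%nat).
Proof. intros. unfold assets, payment, liab_prio, liab_bank, liab_le, liab; cbn -[Rmin Rmax];
  repeat (destruct Req_dec_T; [lra|]); rewrite ?Rplus_0_r, ?Rminus_0_r, ?Rmult_1_l, ?Rdiv_1_r.
  unfold Rmin, Rmax; repeat (destruct Rle_dec); lra. Qed.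
Lemma a22 r : 0 <= assets S2 r 2.
Proof. crunch. Qed.
Lemma l10 r : liab_bank S1 r 0 = 2. Proof. cbn. lra. Qed.
Lemma l11 r : liab_bank S1 r 1 = 2. Proof. cbn. lra. Qed.
Lemma l12 r : liab_bank S1 r 2 = 0. Proof. cbn. lra. Qed.
Lemma l20 r : liab_bank S2 r 0 = 2. Proof. cbn. lra. Qed.
Lemma l21 r : liab_bank S2 r 1 = 2. Proof. cbn. lra. Qed.
Lemma l22 r : liab_bank S2 r 2 = 0. Proof. cbn. lra. Qed.

Definition r1s (n:nat) : R := match n with O => 1/2 | 1%nat => 0 | _ => 1 end.
Definition r2s (n:nat) : R := match n with O => 3/4 | 1%nat => 1/2 | _ => 1 end.

Lemma sol1 r : is_solution S1 r -> r 0%nat = 1/2 /\ r 1%nat = 0 /\ r 2%nat = 1.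
Proof.
  intros H.
  destruct (H 0%nat ltac:(cbn; lia)) as [B0 [G0 L0]].
  destruct (H 1%nat ltac:(cbn; lia)) as [B1 [G1 L1]].
  destruct (H 2%nat ltac:(cbn; lia)) as [B2 [G2 L2]].
  rewrite a10, l10 in G0, L0 by lra.
  rewrite a11, l11 in G1, L1 by lra.
  pose proof (a12 r). rewrite l12 in G2, L2.
  assert (r 2%nat = 1) by (apply G2; lra).
  unfold Rmax in *. destruct Rle_dec.
  - assert (E1 : r 1%nat = (2 * r 0%nat - 1) / 2) by (apply L1; lra).
    destruct (Rlt_or_le (1 + r 1%nat) 2).
    + specialize (L0 H2). lra.
    + lra.
  - assert (E1 : r 1%nat = 0 / 2) by (apply L1; lra).
    destruct (Rlt_or_le (1 + r 1%nat) 2).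
    + specialize (L0 H2). lra.
    + lra.
Qed.

Lemma sol2 r : is_solution S2 r -> r 0%nat = 3/4 /\ r 1%nat = 1/2 /\ r 2%nat = 1.
Proof.
  intros H.
  destruct (H 0%nat ltac:(cbn; lia)) as [B0 [G0 L0]].
  destruct (H 1%nat ltac:(cbn; lia)) as [B1 [G1 L1]].
  destruct (H 2%nat ltac:(cbn; lia)) as [B2 [G2 L2]].
  rewrite a20, l20 in G0, L0 by lra.
  rewrite a21, l21 in G1, L1 by lra.
  pose proof (a22 r). rewrite l22 in G2, L2.
  assert (r 2%nat = 1) by (apply G2; lra).
  unfold Rmin in *. destruct Rle_dec.
  - assert (E1 : r 1%nat = 1 / 2) by (apply L1; lra).
    destruct (Rlt_or_le (1 + r 1%nat) 2).
    + specialize (L0 H2). lra.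
    + lra.
  - assert (E1 : r 1%nat = (2 * r 0%nat) / 2) by (apply L1; lra).
    destruct (Rlt_or_le (1 + r 1%nat) 2).
    + specialize (L0 H2). lra.
    + lra.
Qed.

Lemma is1 : is_solution S1 r1s.
Proof.
  intros v Hv. cbn in Hv.
  destruct v as [|[|[|v]]]; try lia.
  - rewrite a10, l10 by (cbn; lra). cbn. repeat split; intros; lra.
  - rewrite a11, l11 by (cbn; lra). cbn. unfold Rmax; destruct Rle_dec; repeat split; intros; lra.
  - pose proof (a12 r1s). rewrite l12. cbn. repeat split; intros; lra.
Qed.

Lemma is2 : is_solution S2 r2s.
Proof.
  intros v Hv. cbn in Hv.
  destruct v as [|[|[|v]]]; try lia.
  - rewrite a20, l20 by (cbn; lra). cbn. repeat split; intros; lra.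
  - rewrite a21, l21 by (cbn; lra). cbn. unfold Rmin; destruct Rle_dec; repeat split; intros; lra.
  - pose proof (a22 r2s). rewrite l22. cbn. repeat split; intros; lra.
Qed.

Theorem mainTheorem8 :
  exists (S : fsystem) (v : nat),
    wf_system S /\ (v < nbanks S)%nat /\
    exists r : nat -> R, unique_solution S r /\
    exists S' : fsystem, wf_system S' /\ reprioritized S S' v /\
    exists r' : nat -> R, unique_solution S' r' /\ r' v > r v.
Proof.
  exists S1, 0%nat. split.
  { split; [cbn; lia|]. split.
    - intros v _. destruct v; cbn; lra.
    - repeat constructor; cbn; try lia; try lra. }
  split; [cbn; lia|].
  exists r1s. split.
  { split; [exact is1|]. intros r' Hr u Hu. apply sol1 in Hr.
    cbn in Hu. destruct u as [|[|[|u]]]; cbn; try lia; lra. }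
  exists S2. split.
  { split; [cbn; lia|]. split.
    - intros v _. destruct v; cbn; lra.
    - repeat constructor; cbn; try lia; try lra. }
  split.
  { split; [reflexivity|]. split; [reflexivity|]. split; [reflexivity|].
    repeat constructor; cbn; intros; try lia; try reflexivity. }
  exists r2s. split.
  { split; [exact is2|]. intros r' Hr u Hu. apply sol2 in Hr.
    cbn in Hu. destruct u as [|[|[|u]]]; cbn; try lia; lra. }
  cbn. lra.
Qed.
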